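(* Consider a transient MDP with a sink state as in the context. For each $\pi\in\Pi_{\mathrm{SD}}$ and $t\in\mathbb N$: \[ \lim_{\beta\to0}g_t(\pi,\beta)=g_t(\pi,0),\quad \lim_{\beta\to0}g^\star_t(\beta)=g^\star_t(0),\quad \lim_{\beta\to0}g_\infty(\pi,\beta)=g_\infty(\pi,0),\quad \lim_{\beta\to0}g^\star_\infty(\beta)=g^\star_\infty(0), \] where $\beta\to0$ from above.
   Context: MDP: states $\mathcal S=\{1,\dots,S\}$ plus sink state $e$ ($p(e,a,e)=1$, $r(e,a,e)=0$); finite actions; transitions $p(s,a,s')$, real rewards $r(s,a,s')$ of arbitrary sign; initial distribution $\mu$ on $\mathcal S$ with $\mu>0$. Transience: for every stationary deterministic policy $\pi$, $\sum_{t\ge0}\mathbb P^{\pi,s}[\tilde s_t=s']<\infty$ for all $s,s'\in\mathcal S$. $\Pi_{\mathrm{SD}}$ stationary deterministic, $\Pi_{\mathrm{HR}}$ history-dependent randomized policies. $\mathrm{ERM}_\beta[\tilde x]=-\beta^{-1}\log\mathbb E e^{-\beta\tilde x}$ for $\beta>0$ and $\mathrm{ERM}_0=\mathbb E$. $g_t(\pi,\beta)=\mathrm{ERM}^{\pi,\mu}_\beta[\sum_{k=0}^t r(\tilde s_k,\tilde a_k,\tilde s_{k+1})]$, $g^\star_t(\beta)=\sup_{\pi\in\Pi_{\mathrm{HR}}}g_t(\pi,\beta)$, $g_\infty(\pi,\beta)=\liminf_t g_t(\pi,\beta)$, $g^\star_\infty(\beta)=\liminf_t g^\star_t(\beta)$.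 *)

(* Defs.v *)
From mathcomp Require Import all_boot all_order all_algebra.
From mathcomp Require Import all_classical all_reals all_analysis.
Set Implicit Arguments. Unset Strict Implicit. Unset Printing Implicit Defensive.
Import Order.TTheory GRing.Theory Num.Theory.
Local Open Scope ring_scope.

(* States: [option S]; [Some s] is a state of the set 𝒮 = S, [None] is the sink e.
   A history h_t = (s_0,a_0,...,s_{t-1},a_{t-1},s_t) is represented by the
   past pairs [seq (s_k,a_k)] together with the current state s_t. *)
Definition policy (S A : finType) (R : realType) :=
  seq (option S * A) -> option S -> A -> R.

Definition is_HR (S A : finType) (R : realType) (pi : policy S A R) : Prop :=
  forall h s, (forall a, 0 <= pi h s a) /\ \sum_(a : A) pi h s a = 1.

Definition sd_policy (S A : finType) (R : realType) (d : option S -> A)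
  : policy S A R := fun _ s a => if a == d s then 1 else 0.

(* Expectation, under the process started at history (h, s) and driven by pi
   and p, of a function F of the next n transitions
   [:: (s_k,a_k,s_{k+1}); ...]  (finite-horizon Ionescu-Tulcea law). *)
Fixpoint trajE (S A : finType) (R : realType)
  (p : option S -> A -> option S -> R) (pi : policy S A R) (n : nat)
  (h : seq (option S * A)) (s : option S)
  (F : seq (option S * A * option S) -> R) {struct n} : R :=
  match n with
  | 0 => F [::]
  | n'.+1 => \sum_(a : A) pi h s a *
              \sum_(s' : option S) p s a s' *
                 trajE p pi n' (rcons h (s, a)) s'
                       (fun tr => F ((s, a, s') :: tr))
  end.

Definition expect (S A : finType) (R : realType)
  (p : option S -> A -> option S -> R) (mu : S -> R) (pi : policy S A R)
  (n : nat) (F : seq (option S * A * option S) -> R) : R :=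
  \sum_(s : S) mu s * trajE p pi n [::] (Some s) F.

Definition ret (S A : finType) (R : realType)
  (r : option S -> A -> option S -> R) (tr : seq (option S * A * option S)) : R :=
  \sum_(x <- tr) r x.1.1 x.1.2 x.2.

(* g_t(pi,beta) = ERM_beta[ sum_{k=0}^t r(s_k,a_k,s_{k+1}) ]  (t+1 transitions);
   ERM_0 = E, ERM_beta[X] = -beta^{-1} log E e^{-beta X} for beta > 0. *)
Definition g (S A : finType) (R : realType)
  (p r : option S -> A -> option S -> R) (mu : S -> R) (pi : policy S A R)
  (t : nat) (beta : R) : R :=
  if beta == 0 then expect p mu pi t.+1 (ret r)
  else - beta^-1 * ln (expect p mu pi t.+1 (fun tr => expR (- beta * ret r tr))).

Definition gstar (S A : finType) (R : realType)
  (p r : option S -> A -> option S -> R) (mu : S -> R) (t : nat) (beta : R)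
  : \bar R :=
  ereal_sup [set (g p r mu pi t beta)%:E | pi in [set pi | is_HR pi]].

Definition ginf (S A : finType) (R : realType)
  (p r : option S -> A -> option S -> R) (mu : S -> R) (pi : policy S A R)
  (beta : R) : \bar R :=
  limn_einf (fun t => (g p r mu pi t beta)%:E).

Definition gstarinf (S A : finType) (R : realType)
  (p r : option S -> A -> option S -> R) (mu : S -> R) (beta : R) : \bar R :=
  limn_einf (fun t => gstar p r mu t beta).

Definition state_prob (S A : finType) (R : realType)
  (p : option S -> A -> option S -> R) (pi : policy S A R) (s s' : option S)
  (t : nat) : R :=
  trajE p pi t [::] s (fun tr => if last s [seq x.2 | x <- tr] == s' then 1 else 0).

Definition transient (S A : finType) (R : realType)
  (p : option S -> A -> option S -> R) : Prop :=
  forall (d : option S -> A) (s s' : S),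
    exists M : R, forall n, \sum_(k < n) state_prob p (sd_policy R d) (Some s) (Some s') k <= M.

(* Main.v *)
Require Import Defs.
From mathcomp Require Import all_boot all_order all_algebra.
From mathcomp Require Import all_classical all_reals all_analysis.
From mathcomp Require Import ring lra.
Import Order.TTheory GRing.Theory Num.Theory.
Import numFieldNormedType.Exports.
Set Implicit Arguments. Unset Strict Implicit. Unset Printing Implicit Defensive.
Local Open Scope ring_scope.
Local Open Scope classical_set_scope.


Section Traj.
Variables (R : realType) (S A : finType) (p : option S -> A -> option S -> R).
Hypothesis p_ge0 : forall s a s', 0 <= p s a s'.
Hypothesis p_sum1 : forall s a, \sum_(s' : option S) p s a s' = 1.

Lemma trajE_add (pi : policy S A R) n h s F G :
  trajE p pi n h s (fun tr => F tr + G tr) = trajE p pi n h s F + trajE p pi n h s G.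
Proof.
elim: n h s F G => [|n IH] h s F G //=.
rewrite -big_split /=; apply: eq_bigr => a _; rewrite -mulrDr; congr (_ * _).
rewrite -big_split /=; apply: eq_bigr => s' _; rewrite -mulrDr; congr (_ * _).
exact: IH.
Qed.

Lemma trajE_scale (pi : policy S A R) n h s c F :
  trajE p pi n h s (fun tr => c * F tr) = c * trajE p pi n h s F.
Proof.
elim: n h s F => [|n IH] h s F //=.
rewrite mulr_sumr; apply: eq_bigr => a _; rewrite mulrCA; congr (_ * _).
rewrite mulr_sumr; apply: eq_bigr => s' _; rewrite mulrCA; congr (_ * _).
exact: IH.
Qed.

Lemma trajE_const (pi : policy S A R) n h s c : is_HR pi ->
  trajE p pi n h s (fun _ => c) = c.
Proof.
move=> Hpi; elim: n h s => [|n IH] h s //=.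
under eq_bigr => a _ do (under eq_bigr => s' _ do rewrite IH; rewrite -mulr_suml p_sum1 mul1r).
by rewrite -mulr_suml (proj2 (Hpi h s)) mul1r.
Qed.

Lemma trajE_le (pi : policy S A R) n h s F G : is_HR pi ->
  (forall tr, F tr <= G tr) -> trajE p pi n h s F <= trajE p pi n h s G.
Proof.
move=> Hpi; elim: n h s F G => [|n IH] h s F G FG //=.
apply: ler_sum => a _; apply: ler_wpM2l; first exact: (proj1 (Hpi h s)).
apply: ler_sum => s' _; apply: ler_wpM2l => //.
by apply: IH => tr; apply: FG.
Qed.

End Traj.

Lemma trajE_sum (R : realType) (S A : finType) (p : option S -> A -> option S -> R)
  (I : finType) (pi : policy S A R) n h s (F : I -> seq (option S * A * option S) -> R) :
  trajE p pi n h s (fun tr => \sum_(i : I) F i tr) = \sum_(i : I) trajE p pi n h s (F i).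
Proof.
elim: n h s F => [|n IH] h s F //=.
rewrite exchange_big /=; apply: eq_bigr => a _; rewrite -mulr_sumr; congr (_ * _).
rewrite exchange_big /=; apply: eq_bigr => s' _; rewrite -mulr_sumr; congr (_ * _).
exact: IH.
Qed.

Lemma le_sum_nonneg (R : realType) (I : finType) (F : I -> R) i :
  (forall j, 0 <= F j) -> F i <= \sum_j F j.
Proof.
move=> H; rewrite (bigD1 i) //= lerDl; apply: sumr_ge0 => j _; exact: H.
Qed.


Section Val.
Variables (R : realType) (S A : finType) (p : option S -> A -> option S -> R).
Hypothesis p_ge0 : forall s a s', 0 <= p s a s'.
Hypothesis p_sum1 : forall s a, \sum_(s' : option S) p s a s' = 1.
Hypothesis p_sink : forall a, p None a None = 1.
Variable a0 : A.

Lemma p_None0 a s' : s' != None -> p None a s' = 0.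
Proof.
move=> hs'; have := p_sum1 None a; rewrite (bigD1 None) //= p_sink.
move=> /eqP; rewrite -[X in _ == X]addr0 (inj_eq (addrI _)) => /eqP.
by move/psumr_eq0P => -> //= x _; exact: p_ge0.
Qed.

Lemma sum_None a (f : option S -> R) : \sum_(s' : option S) p None a s' * f s' = f None.
Proof.
rewrite (bigD1 None) //= p_sink mul1r big1 ?addr0 // => x hx.
by rewrite p_None0 ?mul0r.
Qed.

Definition Pa (w : option S -> R) x a := \sum_(s' : option S) p x a s' * w s'.

Definition greedy (w : option S -> R) x : A := Order.arg_max a0 xpredT (Pa w x).

Lemma greedy_max w x a : Pa w x a <= Pa w x (greedy w x).
Proof. by rewrite /greedy; case: arg_maxP => // i _ H; apply: H. Qed.

Lemma Pa_le w1 w2 x a : (forall y, w1 y <= w2 y) -> Pa w1 x a <= Pa w2 x a.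
Proof. by move=> H; apply: ler_sum => y _; apply: ler_wpM2l. Qed.

Lemma Pa_None w a : Pa w None a = w None.
Proof. exact: sum_None. Qed.

Fixpoint v n : option S -> R :=
  if n is n'.+1 then fun x => (x != None)%:R + Pa (v n') x (greedy (v n') x)
  else fun _ => 0.

Lemma v_None n : v n None = 0.
Proof. by elim: n => //= n IH; rewrite Pa_None IH addr0. Qed.

Lemma v_ge0 n x : 0 <= v n x.
Proof.
elim: n x => //= n IH x; apply: addr_ge0 => //.
by apply: sumr_ge0 => y _; apply: mulr_ge0.
Qed.

Lemma v_mono n x : v n x <= v n.+1 x.
Proof.
elim: n x => [|n IH] x; first exact: v_ge0.
rewrite [v n.+2 x]/= [v n.+1 x]/=; apply: lerD => //.
apply: (le_trans (Pa_le _ _ IH)); exact: greedy_max.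
Qed.

End Val.


Section SD.
Variables (R : realType) (S A : finType) (p : option S -> A -> option S -> R).
Hypothesis p_ge0 : forall s a s', 0 <= p s a s'.
Hypothesis p_sum1 : forall s a, \sum_(s' : option S) p s a s' = 1.
Hypothesis p_sink : forall a, p None a None = 1.

Implicit Types d : option S -> A.

Definition Q (d : option S -> A) (phi : option S -> R) k s :=
  trajE p (sd_policy R d) k [::] s (fun tr => phi (last s [seq x.2 | x <- tr])).

Definition ind (x : option S) : R := (x != None)%:R.

Lemma trajE_sd_hist d n h s F :
  trajE p (sd_policy R d) n h s F = trajE p (sd_policy R d) n [::] s F.
Proof.
elim: n h s F => [|n IH] h s F //=.
apply: eq_bigr => a _; congr (_ * _); apply: eq_bigr => s' _; congr (_ * _).
by rewrite IH [RHS]IH.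
Qed.

Lemma sd_sum d h s (X : A -> R) : \sum_a sd_policy R d h s a * X a = X (d s).
Proof.
rewrite (bigD1 (d s)) //= /sd_policy eqxx mul1r big1 ?addr0 // => a /negbTE ->.
by rewrite mul0r.
Qed.

Lemma sd_HR d : is_HR (sd_policy R d).
Proof.
move=> h s; split; first by move=> a; rewrite /sd_policy; case: ifP.
by have := sd_sum d h s (fun _ => 1); under eq_bigr do rewrite mulr1.
Qed.

Lemma Q_succ d phi k s : Q d phi k.+1 s = \sum_s' p s (d s) s' * Q d phi k s'.
Proof.
rewrite /Q [trajE _ _ k.+1 _ _ _]/= sd_sum; apply: eq_bigr => s' _.
by rewrite trajE_sd_hist.
Qed.

Lemma Q_le d phi1 phi2 k s : (forall x, phi1 x <= phi2 x) -> Q d phi1 k s <= Q d phi2 k s.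
Proof. by move=> H; apply: trajE_le => //; exact: sd_HR. Qed.

Lemma Q_scale d c phi k s : Q d (fun x => c * phi x) k s = c * Q d phi k s.
Proof. exact: trajE_scale. Qed.

Lemma Q_bound d (w : option S -> R) : w None = 0 ->
  (forall x, w x <= ind x + Pa p w x (d x)) ->
  forall N s, w s <= \sum_(k < N) Q d ind k s + Q d w N s.
Proof.
move=> w0 Hw; elim => [|N IH] s; first by rewrite big_ord0 add0r.
rewrite big_ord_recl Q_succ.
apply: (le_trans (Hw s)); rewrite -addrA; apply: lerD => //.
rewrite /Pa.
under [X in _ <= X + _]eq_bigr => i _ do rewrite lift0 Q_succ.
rewrite exchange_big /= -big_split /=; apply: ler_sum => s' _.
rewrite -mulr_sumr -mulrDr; apply: ler_wpM2l => //; exact: IH.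
Qed.

Lemma ind_sum (x : option S) : ind x = \sum_(s' : S) (if x == Some s' then 1 else 0).
Proof.
case: x => [y|]; last by rewrite big1.
rewrite /ind (bigD1 y) //= eqxx big1 ?addr0 // => z hz.
case: eqP => // -[] e; by move: hz; rewrite e eqxx.
Qed.

Lemma Q_ind_sum d s K : \sum_(k < K) Q d ind k (Some s) =
  \sum_(s' : S) \sum_(k < K) state_prob p (sd_policy R d) (Some s) (Some s') k.
Proof.
rewrite exchange_big /=; apply: eq_bigr => k _.
rewrite /Q /state_prob -trajE_sum; congr trajE; apply/funext => tr.
exact: ind_sum.
Qed.

Lemma trans_unif : transient p ->
  exists L, 0 <= L /\ forall d s K, \sum_(k < K) Q d ind k (Some s) <= L.
Proof.
move=> Ht.
have /choice [M HM] : forall fss : {ffun option S -> A} * S * S, exists M : R,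
   forall K, \sum_(k < K) state_prob p (sd_policy R fss.1.1) (Some fss.1.2) (Some fss.2) k <= M.
  by case=> [[f s] s']; exact: Ht.
have M0 fss : 0 <= M fss by have := HM fss 0%N; rewrite big_ord0.
exists (\sum_(f : {ffun option S -> A}) \sum_(s : S) \sum_(s' : S) M (f, s, s')).
split; first by do 3 (apply: sumr_ge0 => ? _).
move=> d s K.
have -> : d = (fun x => (finfun d) x) by apply/funext => x; rewrite ffunE.
rewrite Q_ind_sum.
apply: (le_trans (ler_sum _ (fun s' _ => HM (finfun d, s, s') K))) => /=.
have H1 : \sum_(s' : S) M (finfun d, s, s') <= \sum_(s0 : S) \sum_(s' : S) M (finfun d, s0, s').
  by apply: (@le_sum_nonneg _ _ (fun s0 => \sum_(s' : S) M (finfun d, s0, s'))) => j; apply: sumr_ge0.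
apply: (le_trans H1).
by apply: (@le_sum_nonneg _ _ (fun f => \sum_(s0 : S) \sum_(s' : S) M (f, s0, s'))) => j; do 2 (apply: sumr_ge0 => ? _).
Qed.

End SD.


Lemma arith_W (R : realType) (L W k : R) : 0 <= L -> 0 <= W -> 2 * L < k ->
  k * W <= k * L + W * L -> W <= 2 * L.
Proof.
move=> L0 W0 HKgt Hk; rewrite leNgt; apply/negP => HW.
have h1 : 0 < k - L by lra.
have h2 : 2 * L * (k - L) < W * (k - L) by rewrite ltr_pM2r.
have h3 : 0 <= L * (k - 2 * L) by apply: mulr_ge0; lra.
lra.
Qed.

Lemma arith_L (R : realType) (L : R) : 0 <= L ->
  [/\ 0 < 2 * L + 1, 0 <= 2 * L + 1, 0 <= 2 * L & 2 * L <= 2 * L + 1].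
Proof. move=> L0; split; lra. Qed.

Lemma sum_aux (R : realType) (S A : finType) (p : option S -> A -> option S -> R) (d : option S -> A) (w : option S -> R) (L : R) (K : nat) (s : S) :
  \sum_(N < K) (L + w (Some s) * Q p d (@ind R S) N (Some s)) = K%:R * L + w (Some s) * \sum_(N < K) Q p d (@ind R S) N (Some s).
Proof. by rewrite big_split mulr_sumr sumr_const card_ord mulr_natl. Qed.

Lemma sum_const_aux (R : realType) (c : R) (K : nat) : \sum_(N < K) c = K%:R * c.
Proof. by rewrite sumr_const card_ord mulr_natl. Qed.

Section VB.
Variables (R : realType) (S A : finType) (p : option S -> A -> option S -> R).
Hypothesis p_ge0 : forall s a s', 0 <= p s a s'.
Hypothesis p_sum1 : forall s a, \sum_(s' : option S) p s a s' = 1.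
Hypothesis p_sink : forall a, p None a None = 1.
Hypothesis Ht : transient p.
Variable a0 : A.

Lemma v_bound : exists B, 0 < B /\ forall n x, v p a0 n x <= B.
Proof.
have [L [L0 HL]] := trans_unif Ht.
have [La Lb Lc Ld] := arith_L L0.
exists (2 * L + 1); split => //.
case=> [|n] x; first exact: Lb.
set w := v p a0 n.+1; set d := greedy p a0 (v p a0 n).
have w0 : w None = 0 by exact: (v_None p_ge0 p_sum1 p_sink).
have Hw : forall x, w x <= ind R x + Pa p w x (d x).
  move=> y; rewrite /w [v _ _ n.+1 y]/=; apply: lerD => //.
  by apply: Pa_le => // z; exact: (v_mono p_ge0).
clearbody w d.
have [xs Hmax] : exists xs, forall y, w y <= w xs.
  by exists (Order.arg_max None xpredT w) => y; case: arg_maxP => // i _ H; apply: H.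
suff : w xs <= 2 * L by move=> H; apply: (le_trans (Hmax x)); exact: le_trans H Ld.
have W0 : 0 <= w xs by rewrite -w0; exact: Hmax.
case: xs Hmax W0 => [s|] Hmax W0; last by rewrite w0 in W0 *; exact: Lc.
have HN : forall N, w (Some s) <= L + w (Some s) * Q p d (@ind R S) N (Some s).
  move=> N; apply: (le_trans (Q_bound p_ge0 w0 Hw N (Some s))).
  apply: lerD; first exact: HL.
  rewrite -Q_scale; apply: Q_le => // y; rewrite /ind.
  case: y => [y|]; last by rewrite w0 /= mulr0.
  by rewrite /= mulr1 Hmax.
have HK : forall K : nat, K%:R * w (Some s) <= K%:R * L + w (Some s) * L.
  move=> K.
  have H : \sum_(N < K) w (Some s) <= \sum_(N < K) (L + w (Some s) * Q p d (@ind R S) N (Some s)).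
    apply: ler_sum => N _; exact: (HN N).
  rewrite sum_aux sum_const_aux in H.
  apply: (le_trans H); apply: lerD; first exact: lexx.
  apply: ler_wpM2l; [exact: W0 | exact: HL].
set K := (Num.truncn (2 * L)).+1.
have HKgt : 2 * L < K%:R by exact: truncnS_gt.
have := HK K; set k := K%:R => Hk.
exact: arith_W L0 W0 HKgt Hk.
Qed.

End VB.


Lemma trajE_S (R : realType) (S A : finType) (p : option S -> A -> option S -> R)
  (pi : policy S A R) n h s F :
  trajE p pi n.+1 h s F = \sum_a pi h s a * \sum_s' p s a s' *
     trajE p pi n (rcons h (s, a)) s' (fun tr => F ((s, a, s') :: tr)).
Proof. by []. Qed.

Lemma ret_cons (R : realType) (S A : finType) (r : option S -> A -> option S -> R) x tr :
  ret r (x :: tr) = r x.1.1 x.1.2 x.2 + ret r tr.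
Proof. by rewrite /ret big_cons. Qed.

Lemma trajE_ge0 (R : realType) (S A : finType) (p : option S -> A -> option S -> R)
  (p_ge0 : forall s a s', 0 <= p s a s') (p_sum1 : forall s a, \sum_(s' : option S) p s a s' = 1)
  (pi : policy S A R) n h s F : is_HR pi -> (forall tr, 0 <= F tr) -> 0 <= trajE p pi n h s F.
Proof.
move=> Hpi HF; rewrite -(trajE_const p_sum1 n h s 0 Hpi).
exact: (trajE_le p_ge0 n h s Hpi HF).
Qed.

Lemma Pa_aux (R : realType) (S A : finType) (p : option S -> A -> option S -> R)
  (p_sum1 : forall s a, \sum_(s' : option S) p s a s' = 1) (c : R) (f : option S -> R) x a :
  \sum_(s' : option S) p x a s' * (c * (1 + f s')) = c * (1 + Pa p f x a).
Proof.
have -> : c * (1 + Pa p f x a) = c * (\sum_(s' : option S) p x a s' + Pa p f x a) by rewrite p_sum1.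
rewrite /Pa -big_split /= mulr_sumr; apply: eq_bigr => s' _.
by rewrite mulrCA mulrDr mulr1.
Qed.

Lemma arith_lam (R : realType) (lam V B : R) : 1 <= lam -> V <= B -> (lam - 1) * B <= 1 ->
  lam * V <= 1 + V.
Proof.
move=> h1 h2 h3.
have h4 : (lam - 1) * V <= (lam - 1) * B by apply: ler_wpM2l => //; rewrite subr_ge0.
lra.
Qed.

Lemma sum_pi_const (R : realType) (S A : finType) (pi : policy S A R) h s (c : R) :
  is_HR pi -> \sum_a pi h s a * c = c.
Proof. by move=> Hpi; rewrite -mulr_suml (proj2 (Hpi h s)) mul1r. Qed.

Section Exp.
Variables (R : realType) (S A : finType) (p r : option S -> A -> option S -> R).
Hypothesis p_ge0 : forall s a s', 0 <= p s a s'.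
Hypothesis p_sum1 : forall s a, \sum_(s' : option S) p s a s' = 1.
Hypothesis p_sink : forall a, p None a None = 1.
Hypothesis r_sink : forall a, r None a None = 0.
Variable a0 : A.
Variables (B gam lam : R).
Hypothesis HB : forall n x, v p a0 n x <= B.
Hypothesis Hlam : forall x a s', expR (gam * r x a s') <= lam.
Hypothesis Hlam1 : 1 <= lam.
Hypothesis HlamB : (lam - 1) * B <= 1.

Lemma exp_bound (pi : policy S A R) : is_HR pi -> forall n h s,
  trajE p pi n h s (fun tr => expR (gam * ret r tr)) <= 1 + v p a0 n s.
Proof.
move=> Hpi; elim => [|n IH] h s.
  by rewrite /= /ret big_nil mulr0 expR0 addr0.
rewrite trajE_S.
have E a s' : trajE p pi n (rcons h (s, a)) s' (fun tr => expR (gam * ret r ((s, a, s') :: tr)))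
   = expR (gam * r s a s') * trajE p pi n (rcons h (s, a)) s' (fun tr => expR (gam * ret r tr)).
  rewrite -trajE_scale; congr trajE; apply/funext => tr.
  by rewrite ret_cons mulrDr expRD.
under eq_bigr => a _ do under eq_bigr => s' _ do rewrite E.
have pi0 a : 0 <= pi h s a by exact: (proj1 (Hpi h s)).
have T0 a s' : 0 <= trajE p pi n (rcons h (s, a)) s' (fun tr => expR (gam * ret r tr)).
  by apply: (trajE_ge0 p_ge0 p_sum1) => // tr; apply: ltW; exact: expR_gt0.
clear E; case: s pi0 T0 => [y|] pi0 T0.
- set V := v p a0 n.+1 (Some y).
  have HV : V = 1 + Pa p (v p a0 n) (Some y) (greedy p a0 (v p a0 n) (Some y)) by exact: erefl.
  apply: (@le_trans _ _ (\sum_a pi h (Some y) a * (lam * V))).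
    apply: ler_sum => a _; apply: ler_wpM2l; first exact: pi0.
    apply: (@le_trans _ _ (\sum_s' p (Some y) a s' * (lam * (1 + v p a0 n s')))).
      apply: ler_sum => s' _; apply: ler_wpM2l; first exact: p_ge0.
      apply: ler_pM; [apply: ltW; exact: expR_gt0| exact: T0 | exact: Hlam | exact: IH].
    rewrite Pa_aux // HV; apply: ler_wpM2l; first exact: le_trans ler01 Hlam1.
    apply: lerD; first exact: lexx.
    exact: (greedy_max p a0 (v p a0 n) (Some y) a).
  rewrite sum_pi_const //; exact: arith_lam Hlam1 (HB _ _) HlamB.
- apply: (@le_trans _ _ (\sum_a pi h None a * 1)).
    apply: ler_sum => a _; apply: ler_wpM2l; first exact: pi0.
    rewrite (sum_None p_ge0 p_sum1 p_sink a (fun s' => expR (gam * r None a s') *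
       trajE p pi n (rcons h (None, a)) s' (fun tr => expR (gam * ret r tr)))).
    rewrite r_sink mulr0 expR0 mul1r.
    have := IH (rcons h (None, a)) None.
    by rewrite (v_None p_ge0 p_sum1 p_sink) addr0.
  by rewrite sum_pi_const // (v_None p_ge0 p_sum1 p_sink) addr0.
Qed.

End Exp.


Lemma LA (R : realType) (z : R) : expR z <= 1 + z + z ^+ 2 * expR `|z|.
Proof.
have ez := expR_gt0 z.
have e1 : expR z * (1 - z) <= 1.
  have h : 1 - z <= expR (- z) by have := expR_ge1Dx (- z).
  have := ler_wpM2l (ltW ez) h; rewrite -expRD addrN expR0 => h'; exact: h'.
have e2 : z * (expR z - 1) <= z ^+ 2 * expR `|z|.
  have [z0|z0] := leP 0 z.
    rewrite ger0_norm // expr2 -mulrA; apply: ler_wpM2l => //.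
    lra.
  have h : 1 + z <= expR z := expR_ge1Dx z.
  have h1 : 1 <= expR `|z| by have := expR_ge1Dx `|z|; have := normr_ge0 z; lra.
  have h2 : 0 <= z ^+ 2 := sqr_ge0 z.
  have h3 : z ^+ 2 <= z ^+ 2 * expR `|z| by rewrite ler_peMr.
  have h4 : z * (expR z - 1) <= z * z.
    have -> : z * (expR z - 1) = (- z) * (1 - expR z) by ring.
    have -> : z * z = (- z) * (- z) by ring.
    by apply: ler_wpM2l; lra.
  rewrite expr2 in h3; lra.
lra.
Qed.

Lemma LB (R : realType) (y : R) : 0 <= y -> y ^+ 2 <= 4 * expR y.
Proof.
move=> y0.
have h : 1 + y / 2 <= expR (y / 2) := expR_ge1Dx _.
have h0 : 0 <= 1 + y / 2 by lra.
have h2 : (1 + y / 2) * (1 + y / 2) <= expR (y / 2) * expR (y / 2) by apply: ler_pM.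
rewrite -expRD in h2.
have e : y / 2 + y / 2 = y by field.
rewrite e in h2.
have h3 : (1 + y / 2) * (1 + y / 2) = 1 + y + y ^+ 2 / 4 by field.
rewrite h3 in h2; lra.
Qed.

Lemma LC (R : realType) (c b X : R) : 0 < c -> 0 <= b -> b <= c / 2 ->
  X ^+ 2 * expR (b * `|X|) <= 4 * (2 / c) ^+ 2 * (expR (c * X) + expR (- (c * X))).
Proof.
move=> c0 b0 bc.
have nX0 := normr_ge0 X.
set y := c * `|X| / 2.
have y0 : 0 <= y by rewrite /y; apply: divr_ge0 => //; apply: mulr_ge0 => //; exact: ltW.
have hy := LB y0.
have hX : X ^+ 2 = (2 / c) ^+ 2 * y ^+ 2.
  rewrite -real_normK ?num_real // /y; field.
  by rewrite gt_eqF.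
have he : expR (b * `|X|) <= expR y.
  rewrite ler_expR /y mulrAC; apply: ler_wpM2r => //.
have ey : expR y * expR y = expR (c * `|X|) by rewrite -expRD /y; congr expR; field.
have hc : expR (c * `|X|) <= expR (c * X) + expR (- (c * X)).
  have [X0|X0] := leP 0 X.
    rewrite ger0_norm // lerDl; exact: ltW (expR_gt0 _).
  rewrite ltr0_norm // mulrN lerDr; exact: ltW (expR_gt0 _).
have k0 : 0 <= (2 / c) ^+ 2 := sqr_ge0 _.
have ez := expR_gt0 y.
rewrite hX.
apply: (@le_trans _ _ ((2 / c) ^+ 2 * (4 * expR y) * expR y)).
  apply: ler_pM.
  - exact: mulr_ge0 k0 (sqr_ge0 y).
  - exact: ltW (expR_gt0 _).
  - by apply: ler_wpM2l.
  - exact: he.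
have -> : (2 / c) ^+ 2 * (4 * expR y) * expR y = 4 * (2 / c) ^+ 2 * (expR y * expR y) by ring.
rewrite ey; apply: ler_wpM2l; last exact: hc.
by apply: mulr_ge0 => //; lra.
Qed.

Lemma LD (R : realType) (c b X : R) : 0 < c -> 0 <= b -> b <= c / 2 ->
  expR (- b * X) <= 1 + (- b) * X + b ^+ 2 * (4 * (2 / c) ^+ 2 * (expR (c * X) + expR (- (c * X)))).
Proof.
move=> c0 b0 bc.
apply: (le_trans (LA _)); apply: lerD => //.
have -> : (- b * X) ^+ 2 = b ^+ 2 * X ^+ 2 by rewrite mulNr sqrrN exprMn.
rewrite -mulrA; apply: ler_wpM2l; first exact: sqr_ge0.
have -> : `|- b * X| = b * `|X| by rewrite mulNr normrN normrM ger0_norm.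
exact: LC.
Qed.

Lemma LJ (R : realType) (b m X : R) :
  expR (- b * m) * (1 + b * m) + (- (expR (- b * m) * b)) * X <= expR (- b * X).
Proof.
have -> : expR (- b * X) = expR (- b * m) * expR (b * m - b * X).
  by rewrite -expRD; congr expR; ring.
have h := expR_ge1Dx (b * m - b * X).
have := ler_wpM2l (ltW (expR_gt0 (- b * m))) h.
move=> h'; apply: le_trans h'.
suff -> : expR (- b * m) * (1 + b * m) + - (expR (- b * m) * b) * X =
  expR (- b * m) * (1 + (b * m - b * X)) by [].
ring.
Qed.


Section Expect.
Variables (R : realType) (S A : finType) (p : option S -> A -> option S -> R) (mu : S -> R).
Hypothesis p_ge0 : forall s a s', 0 <= p s a s'.
Hypothesis p_sum1 : forall s a, \sum_(s' : option S) p s a s' = 1.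
Hypothesis mu_ge0 : forall s, 0 <= mu s.
Hypothesis mu_sum1 : \sum_(s : S) mu s = 1.

Lemma expect_lin2 (pi : policy S A R) n (a b1 b2 : R) F1 F2 : is_HR pi ->
  expect p mu pi n (fun tr => a + b1 * F1 tr + b2 * F2 tr) =
  a + b1 * expect p mu pi n F1 + b2 * expect p mu pi n F2.
Proof.
move=> Hpi; rewrite /expect.
under eq_bigr => s _ do rewrite !trajE_add trajE_const // !trajE_scale !mulrDr.
rewrite !big_split /= -mulr_suml mu_sum1 mul1r !mulr_sumr; congr (_ + _ + _).
  by apply: eq_bigr => s _; rewrite mulrCA.
by apply: eq_bigr => s _; rewrite mulrCA.
Qed.

Lemma expect_add (pi : policy S A R) n F1 F2 :
  expect p mu pi n (fun tr => F1 tr + F2 tr) = expect p mu pi n F1 + expect p mu pi n F2.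
Proof.
rewrite /expect -big_split /=; apply: eq_bigr => s _; by rewrite trajE_add mulrDr.
Qed.

Lemma expect_le (pi : policy S A R) n F1 F2 : is_HR pi -> (forall tr, F1 tr <= F2 tr) ->
  expect p mu pi n F1 <= expect p mu pi n F2.
Proof.
move=> Hpi H; apply: ler_sum => s _; apply: ler_wpM2l; first exact: mu_ge0.
exact: trajE_le.
Qed.

End Expect.

Lemma arith_g (R : realType) (b m C y : R) : 0 < b -> - b * m <= y -> y <= - b * m + b ^+ 2 * C ->
  m - C * b <= - b^-1 * y /\ - b^-1 * y <= m.
Proof.
move=> b0 h1 h2.
have [u hu] : exists u, y = b * u.
  by exists (b^-1 * y); rewrite mulrA divff ?mul1r // gt_eqF.
have e : - b^-1 * y = - u by rewrite hu mulNr mulrA mulVf ?mul1r // gt_eqF.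
rewrite e; rewrite hu in h1 h2.
have k1 : 0 <= b * (u + m) by rewrite mulrDr; rewrite mulNr in h1; lra.
have k2 : 0 <= b * (- u - m + b * C).
  rewrite !mulrDr !mulrN; rewrite expr2 mulNr in h2; rewrite mulrA; lra.
rewrite pmulr_rge0 // in k1; rewrite pmulr_rge0 // in k2.
split; lra.
Qed.

Lemma LE1 (R : realType) (c X : R) : 0 < c -> X <= 0 + c^-1 * expR (c * X).
Proof.
move=> c0; rewrite add0r.
have h := expR_ge1Dx (c * X).
have h2 : c * X <= expR (c * X) by lra.
by rewrite ler_pdivlMl.
Qed.

Lemma LE2 (R : realType) (c X : R) : 0 < c -> 0 + (- c^-1) * expR (- c * X) <= X.
Proof.
move=> c0; have h := LE1 (- X) c0.
have e : c * - X = - c * X by rewrite mulrN mulNr.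
rewrite e add0r in h; rewrite add0r mulNr; lra.
Qed.


Lemma expect_lin1 (R : realType) (S A : finType) (p : option S -> A -> option S -> R) (mu : S -> R)
  (p_sum1 : forall s a, \sum_(s' : option S) p s a s' = 1)
  (mu_sum1 : \sum_(s : S) mu s = 1) (pi : policy S A R) n (a b : R) F : is_HR pi ->
  expect p mu pi n (fun tr => a + b * F tr) = a + b * expect p mu pi n F.
Proof.
move=> Hpi; have := expect_lin2 p_sum1 mu_sum1 n a b 0 F F Hpi.
rewrite mul0r addr0 => <-; congr expect; apply/funext => tr; by rewrite mul0r addr0.
Qed.

Lemma LD' (R : realType) (c b X : R) : 0 < c -> 0 <= b -> b <= c / 2 ->
  expR (- b * X) <= 1 + (- b) * X + (b ^+ 2 * (4 * (2 / c) ^+ 2)) * (expR (c * X) + expR (- c * X)).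
Proof. by move=> c0 b0 bc; have := LD X c0 b0 bc; rewrite mulrA -mulNr. Qed.

Lemma core (R : realType) (S A : finType) (p r : option S -> A -> option S -> R) (mu : S -> R)
  (p_ge0 : forall s a s', 0 <= p s a s')
  (p_sum1 : forall s a, \sum_(s' : option S) p s a s' = 1)
  (p_sink : forall a, p None a None = 1)
  (r_sink : forall a, r None a None = 0)
  (mu_ge0 : forall s, 0 <= mu s)
  (mu_sum1 : \sum_(s : S) mu s = 1)
  (Ht : transient p) (a0 : A) :
  exists C Bg b0 : R, [/\ 0 < b0, 0 <= C & forall pi, is_HR pi -> forall t,
    `|g p r mu pi t 0| <= Bg /\
    (forall b, 0 < b -> b <= b0 ->
       g p r mu pi t 0 - C * b <= g p r mu pi t b /\ g p r mu pi t b <= g p r mu pi t 0)].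
Proof.
have [B [B0 HB]] := v_bound p_ge0 p_sum1 p_sink Ht a0.
pose Rm := \sum_(x : option S) \sum_(a : A) \sum_(s' : option S) `|r x a s'|.
have HRm : forall x a s', `|r x a s'| <= Rm.
  move=> x a s'.
  apply: (@le_trans _ _ (\sum_(s'' : option S) `|r x a s''|)).
    by apply: (@le_sum_nonneg _ _ (fun s'' => `|r x a s''|)) => j.
  apply: (@le_trans _ _ (\sum_(a' : A) \sum_(s'' : option S) `|r x a' s''|)).
    by apply: (@le_sum_nonneg _ _ (fun a' => \sum_(s'' : option S) `|r x a' s''|)) => j; apply: sumr_ge0.
  by apply: (@le_sum_nonneg _ _ (fun x' => \sum_(a' : A) \sum_(s'' : option S) `|r x' a' s''|)) => j;
    do 2 (apply: sumr_ge0 => ? _).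
have Rm0 : 0 <= Rm by do 3 (apply: sumr_ge0 => ? _).
pose l := ln (1 + B^-1).
have Binv : 0 < B^-1 by rewrite invr_gt0.
have l0 : 0 < l by apply: ln_gt0; lra.
pose c := l / (Rm + 1).
have c0 : 0 < c by apply: divr_gt0 => //; lra.
have cRm1 : c * (Rm + 1) = l by rewrite /c divfK // gt_eqF //; lra.
have cRm : c * Rm <= l by rewrite -cRm1; apply: ler_wpM2l; [exact: ltW|lra].
pose lam := expR (c * Rm).
have Hlam : forall gam, `|gam| <= c -> forall x a s', expR (gam * r x a s') <= lam.
  move=> gam hg x a s'; rewrite ler_expR.
  apply: (le_trans (ler_norm _)); rewrite normrM.
  by apply: ler_pM => //; exact: normr_ge0.
have cRm0 : 0 <= c * Rm by apply: mulr_ge0 => //; exact: ltW.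
have Hlam1 : 1 <= lam by have := expR_ge1Dx (c * Rm); rewrite /lam; lra.
have HlamB : (lam - 1) * B <= 1.
  have h : lam <= 1 + B^-1.
    rewrite /lam -[X in _ <= X]lnK ?ler_expR // posrE; lra.
  have h2 : (lam - 1) * B <= B^-1 * B by apply: ler_wpM2r; [exact: ltW|lra].
  by rewrite mulVf ?gt_eqF in h2.
pose D := 1 + B.
have ED : forall pi, is_HR pi -> forall n gam, `|gam| <= c ->
    expect p mu pi n (fun tr => expR (gam * ret r tr)) <= D.
  move=> pi Hpi n gam hg.
  apply: (@le_trans _ _ (\sum_(s : S) mu s * D)).
    apply: ler_sum => s _; apply: ler_wpM2l; first exact: mu_ge0.
    apply: (le_trans (exp_bound p_ge0 p_sum1 p_sink r_sink HB (Hlam gam hg) Hlam1 HlamB Hpi n [::] (Some s))).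
    by apply: lerD; [exact: lexx|exact: HB].
  by rewrite -mulr_suml mu_sum1 mul1r.
pose K1 := 4 * (2 / c) ^+ 2.
have K10 : 0 <= K1 by apply: mulr_ge0; [exact: ler0n|exact: sqr_ge0].
have D0 : 0 < D by rewrite /D; lra.
exists (K1 * (D + D)), (D / c), (c / 2); split.
- by apply: divr_gt0.
- by apply: mulr_ge0 => //; lra.
move=> pi Hpi t.
pose m := expect p mu pi t.+1 (ret r).
have g0 : g p r mu pi t 0 = m by rewrite /g eqxx.
have Ep : expect p mu pi t.+1 (fun tr => expR (c * ret r tr)) <= D.
  by apply: ED => //; rewrite gtr0_norm.
have En : expect p mu pi t.+1 (fun tr => expR (- c * ret r tr)) <= D.
  by apply: ED => //; rewrite normrN gtr0_norm.
have ci0 : 0 <= c^-1 by rewrite invr_ge0; exact: ltW.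
rewrite g0; split.
  have h1 : m <= 0 + c^-1 * expect p mu pi t.+1 (fun tr => expR (c * ret r tr)).
    rewrite -(expect_lin1 p_sum1 mu_sum1 _ _ _ _ Hpi).
    by apply: (expect_le p_ge0 mu_ge0 _ Hpi) => tr; exact: LE1.
  have h2 : 0 + (- c^-1) * expect p mu pi t.+1 (fun tr => expR (- c * ret r tr)) <= m.
    rewrite -(expect_lin1 p_sum1 mu_sum1 _ _ _ _ Hpi).
    by apply: (expect_le p_ge0 mu_ge0 _ Hpi) => tr; exact: LE2.
  have h3 : c^-1 * expect p mu pi t.+1 (fun tr => expR (c * ret r tr)) <= c^-1 * D.
    exact: ler_wpM2l.
  have h4 : c^-1 * expect p mu pi t.+1 (fun tr => expR (- c * ret r tr)) <= c^-1 * D.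
    exact: ler_wpM2l.
  rewrite ler_norml mulrC; rewrite mulNr in h2; apply/andP; split; lra.
move=> b b0 bb0.
have gb : g p r mu pi t b = - b^-1 * ln (expect p mu pi t.+1 (fun tr => expR (- b * ret r tr))).
  by rewrite /g gt_eqF.
rewrite gb; set Z := expect p mu pi t.+1 (fun tr => expR (- b * ret r tr)).
have HJ : expR (- b * m) <= Z.
  have h := expect_le p_ge0 mu_ge0 t.+1 Hpi (fun tr => LJ b m (ret r tr)).
  rewrite (expect_lin1 p_sum1 mu_sum1 _ _ _ _ Hpi) in h.
  apply: le_trans h; rewrite -/m le_eqVlt; apply/orP; left; apply/eqP; ring.
have Z0 : 0 < Z := lt_le_trans (expR_gt0 _) HJ.
have lo : - b * m <= ln Z by rewrite -ler_expR lnK // posrE.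
have HZ : Z <= 1 + (- b) * m + (b ^+ 2 * K1) * (D + D).
  have h := expect_le p_ge0 mu_ge0 t.+1 Hpi (fun tr => LD' (ret r tr) c0 (ltW b0) bb0).
  rewrite (expect_lin2 p_sum1 mu_sum1 _ _ _ _ _ _ Hpi) expect_add in h.
  apply: (le_trans h); apply: lerD; first exact: lexx.
  apply: ler_wpM2l; first by apply: mulr_ge0 => //; exact: sqr_ge0.
  exact: lerD.
have up : ln Z <= - b * m + b ^+ 2 * (K1 * (D + D)).
  have := le_ln1Dx (x := Z - 1); rewrite addrCA subrr addr0 => h.
  have := h ltac:(lra); rewrite mulrA; lra.
exact: arith_g b0 lo up.
Qed.


Lemma T1 (R : realType) (f : R -> R) (L C b0 : R) : 0 < b0 -> 0 <= C ->
  (forall b, 0 < b -> b <= b0 -> L - C * b <= f b /\ f b <= L) ->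
  f b @[b --> 0^'+] --> L.
Proof.
move=> b00 C0 H; apply/cvgrPdist_le => e e0.
have C1 : 0 < C + 1 by lra.
have d0 : 0 < Num.min b0 (e / (C + 1)).
  by rewrite lt_min; apply/andP; split; [exact: b00|exact: divr_gt0].
near=> b.
have bpos : 0 < b by near: b; exact: nbhs_right_gt.
have bd : b <= Num.min b0 (e / (C + 1)) by near: b; exact: nbhs_right_le.
rewrite le_min in bd; case/andP: bd => bb0 be.
have [h1 h2] := H b bpos bb0.
have hCb1 : C * b <= C * (e / (C + 1)) by exact: ler_wpM2l.
have hCb2 : C * (e / (C + 1)) <= e by rewrite mulrA ler_pdivrMr //; lra.
rewrite ler_norml; apply/andP; split; lra.
Unshelve. all: by end_near.
Qed.

Local Open Scope ereal_scope.

Lemma T5 (R : realType) (f : R -> \bar R) (u : \bar R) (Bg C b0 : R) : (0 < b0)%R -> (0 <= C)%R ->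
  - Bg%:E <= u <= Bg%:E ->
  (forall b, (0 < b)%R -> (b <= b0)%R -> u - (C * b)%:E <= f b <= u) ->
  f b @[b --> 0^'+] --> u.
Proof.
move=> b00 C0 /andP[uB1 uB2] H.
have ufin : u \is a fin_num.
  by rewrite fin_numElt; apply/andP; split;
    [exact: lt_le_trans (ltNyr _) uB1|exact: le_lt_trans uB2 (ltry _)].
rewrite -(fineK ufin); apply: cvg_EFin.
  near=> b.
  have bpos : (0 < b)%R by near: b; exact: nbhs_right_gt.
  have bd : (b <= b0)%R by near: b; exact: nbhs_right_le.
  have /andP[h1 h2] := H b bpos bd.
  rewrite fin_numElt; apply/andP; split.
    apply: lt_le_trans h1; rewrite -(fineK ufin) -EFinB; exact: ltNyr.
  apply: le_lt_trans h2 _; rewrite -(fineK ufin); exact: ltry.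
apply: (@T1 _ _ _ C b0) => // b bpos bd.
have /andP[h1 h2] := H b bpos bd.
have ffin : f b \is a fin_num.
  rewrite fin_numElt; apply/andP; split.
    apply: lt_le_trans h1; rewrite -(fineK ufin) -EFinB; exact: ltNyr.
  apply: le_lt_trans h2 _; rewrite -(fineK ufin); exact: ltry.
move: h1 h2; rewrite -(fineK ufin) -(fineK ffin) -EFinB !lee_fin => h1 h2.
by split.
Unshelve. all: by end_near.
Qed.

Lemma limn_einf_le (R : realType) (u v : (\bar R)^nat) : (forall n, u n <= v n) ->
  limn_einf u <= limn_einf v.
Proof.
move=> H; rewrite !limn_einf_lim.
apply: lee_lim; [exact/is_cvg_einfs|exact/is_cvg_einfs|].
apply: nearW => n; apply: le_ereal_inf_tmp => _ [k /= nk <-].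
apply: (le_trans _ (H k)); apply: ereal_inf_lbound; by exists k.
Qed.

Lemma limn_einf_cst (R : realType) (k : \bar R) : limn_einf (fun _ : nat => k) = k.
Proof.
rewrite is_cvg_limn_einfE; first exact: lim_cst.
apply: is_cvg_cst.
Qed.

Lemma T4 (R : realType) (u : (\bar R)^nat) (v : R -> (\bar R)^nat) (Bg C b0 : R) :
  (0 < b0)%R -> (0 <= C)%R ->
  (forall n, - Bg%:E <= u n <= Bg%:E) ->
  (forall b, (0 < b)%R -> (b <= b0)%R -> forall n, u n - (C * b)%:E <= v b n <= u n) ->
  limn_einf (v b) @[b --> 0^'+] --> limn_einf u.
Proof.
move=> b00 C0 Hu H; apply: (@T5 R _ _ Bg C b0 b00 C0).
  apply/andP; split.
    rewrite -[X in X <= _](limn_einf_cst (- Bg%:E)); apply: limn_einf_le => n.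
    by case/andP: (Hu n).
  rewrite -[X in _ <= X](limn_einf_cst (Bg%:E)); apply: limn_einf_le => n.
  by case/andP: (Hu n).
move=> b bpos bd; apply/andP; split.
  have hf : - (C * b)%:E \is a fin_num by rewrite fin_numN.
  rewrite addeC -(limn_einf_shift _ hf); apply: limn_einf_le => n.
  by rewrite addeC; case/andP: (H b bpos bd n).
by apply: limn_einf_le => n; case/andP: (H b bpos bd n).
Qed.


Local Close Scope ereal_scope.

Unset Implicit Arguments.

Theorem lemma10 (R : realType) (S A : finType)
  (p r : option S -> A -> option S -> R) (mu : S -> R)
  (p_ge0 : forall s a s', 0 <= p s a s')
  (p_sum1 : forall s a, \sum_(s' : option S) p s a s' = 1)
  (p_sink : forall a, p None a None = 1)
  (r_sink : forall a, r None a None = 0)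
  (mu_gt0 : forall s, 0 < mu s)
  (mu_sum1 : \sum_(s : S) mu s = 1)
  (Htrans : transient p)
  (d : option S -> A) (t : nat) :
  [/\ g p r mu (sd_policy R d) t beta @[beta --> (0:R)^'+] --> g p r mu (sd_policy R d) t 0,
      gstar p r mu t beta @[beta --> (0:R)^'+] --> gstar p r mu t 0,
      ginf p r mu (sd_policy R d) beta @[beta --> (0:R)^'+] --> ginf p r mu (sd_policy R d) 0
    & gstarinf p r mu beta @[beta --> (0:R)^'+] --> gstarinf p r mu 0].
Proof.
have mu_ge0 s : 0 <= mu s := ltW (mu_gt0 s).
have [C [Bg [b0 [b00 C0 Hc]]]] := core p_ge0 p_sum1 p_sink r_sink mu_ge0 mu_sum1 Htrans (d None).
have Hsd : is_HR (sd_policy R d) by apply: sd_HR.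
have GB : forall t, (- Bg%:E <= gstar p r mu t 0 <= Bg%:E)%E /\
   forall b, 0 < b -> b <= b0 ->
     (gstar p r mu t 0 - (C * b)%:E <= gstar p r mu t b <= gstar p r mu t 0)%E.
  move=> t'; split.
    apply/andP; split.
      apply: (@le_trans _ _ (g p r mu (sd_policy R d) t' 0)%:E).
        rewrite lee_fin; have [h _] := Hc _ Hsd t'; move: h; rewrite ler_norml.
        by case/andP.
      by apply: ereal_sup_ubound; exists (sd_policy R d).
    apply: ge_ereal_sup => _ [pi Hpi <-]; rewrite lee_fin.
    have [h _] := Hc _ Hpi t'; move: h; rewrite ler_norml.
    by case/andP.
  move=> b bpos bd; apply/andP; split.
    rewrite leeBlDr //; apply: ge_ereal_sup => _ [pi Hpi <-].
    apply: (@le_trans _ _ ((g p r mu pi t' b)%:E + (C * b)%:E)%E).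
      rewrite -EFinD lee_fin; have [_ h] := Hc _ Hpi t'; have [h1 _] := h b bpos bd.
      by rewrite -lerBlDr.
    apply: leeD2r; by apply: ereal_sup_ubound; exists pi.
  apply: ge_ereal_sup => _ [pi Hpi <-].
  apply: (@le_trans _ _ (g p r mu pi t' 0)%:E).
    by rewrite lee_fin; have [_ h] := Hc _ Hpi t'; have [_ h2] := h b bpos bd.
  by apply: ereal_sup_ubound; exists pi.
split.
- apply: (@T1 _ _ _ C b0) => // b bpos bd.
  by have [_ h] := Hc _ Hsd t; exact: h.
- have [h1 h2] := GB t.
  by apply: (@T5 R _ _ Bg C b0) => // b bpos bd; exact: h2.
- apply: (@T4 R _ _ Bg C b0) => //.
    move=> n; rewrite !lee_fin; have [h _] := Hc _ Hsd n; move: h; rewrite ler_norml.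
    by [].
  move=> b bpos bd n; have [_ h] := Hc _ Hsd n; have [h1 h2] := h b bpos bd.
  by rewrite -EFinB !lee_fin h1 h2.
- apply: (@T4 R _ _ Bg C b0) => //.
    by move=> n; have [h _] := GB n.
  by move=> b bpos bd n; have [_ h] := GB n; exact: h.
Qed.
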